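(* Let $(R,\mathfrak{m})$ be a commutative Artinian local ring with identity and $\mathfrak{m}\neq 0$. Every polynomial of positive degree in $R[x]$ that is not a unit of $R[x]$ can be written as a product of (finitely many) irreducible polynomials of $R[x]$.
   Context: A nonunit polynomial $f\in R[x]$ is irreducible if $f=gh$ with $g,h\in R[x]$ implies $g$ or $h$ is a unit of $R[x]$. *)

(* Defs.v *)
From HB Require Import structures.
From mathcomp Require Import all_boot all_order all_algebra.
Set Implicit Arguments. Unset Strict Implicit. Unset Printing Implicit Defensive.
Import GRing.Theory.
Local Open Scope ring_scope.

Definition is_ideal (R : comNzRingType) (I : R -> Prop) : Prop :=
  [/\ I 0, (forall x y, I x -> I y -> I (x + y)) & (forall a x, I x -> I (a * x))].

Definition is_maximal_ideal (R : comNzRingType) (I : R -> Prop) : Prop :=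
  [/\ is_ideal I, ~ I 1 &
      forall J : R -> Prop, is_ideal J -> (forall x, I x -> J x) ->
        J 1 \/ (forall x, J x -> I x)].

Definition local_with (R : comNzRingType) (m : R -> Prop) : Prop :=
  is_maximal_ideal m /\
  forall J : R -> Prop, is_maximal_ideal J -> forall x, J x <-> m x.

Definition artinian (R : comNzRingType) : Prop :=
  forall I : nat -> R -> Prop,
    (forall n, is_ideal (I n)) ->
    (forall n x, I n.+1 x -> I n x) ->
    exists N, forall n, (N <= n)%N -> forall x, I n x <-> I N x.

Definition unit_polyR (R : comNzRingType) (f : {poly R}) : Prop :=
  exists g : {poly R}, f * g = 1.

Definition irreducible_pol (R : comNzRingType) (f : {poly R}) : Prop :=
  ~ unit_polyR f /\
  forall g h : {poly R}, f = g * h -> unit_polyR g \/ unit_polyR h.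

(* Main.v *)
Require Import Defs.
From HB Require Import structures.
From Stdlib Require Import Classical IndefiniteDescription.
From mathcomp Require Import all_boot all_order all_algebra.
Import GRing.Theory.
Local Open Scope ring_scope.

Lemma mI0 {R : comNzRingType} {m : R -> Prop} : is_maximal_ideal m -> m 0.
Proof. by case=> [[]]. Qed.
Lemma mID {R : comNzRingType} {m : R -> Prop} : is_maximal_ideal m ->
  forall x y, m x -> m y -> m (x + y).
Proof. by case=> [[]]. Qed.
Lemma mIM {R : comNzRingType} {m : R -> Prop} : is_maximal_ideal m ->
  forall a x, m x -> m (a * x).
Proof. by case=> [[]]. Qed.
Lemma mIMr {R : comNzRingType} {m : R -> Prop} : is_maximal_ideal m ->
  forall a x, m x -> m (x * a).
Proof. by move=> hM a x hx; rewrite mulrC; apply: mIM. Qed.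
Lemma mIN {R : comNzRingType} {m : R -> Prop} : is_maximal_ideal m ->
  forall x, m x -> m (- x).
Proof. by move=> hM x hx; rewrite -mulN1r; apply: mIM. Qed.
Lemma mI1 {R : comNzRingType} {m : R -> Prop} : is_maximal_ideal m -> ~ m 1.
Proof. by case. Qed.

Lemma mIsum {R : comNzRingType} {m : R -> Prop} : is_maximal_ideal m ->
  forall n (F : 'I_n -> R), (forall i, m (F i)) -> m (\sum_(i < n) F i).
Proof.
move=> hM n F hF; elim/big_ind: _ => //; [exact: mI0 | exact: mID].
Qed.

Lemma m_gen {R : comNzRingType} {m : R -> Prop} : is_maximal_ideal m ->
  forall z, ~ m z -> exists c d, m c /\ 1 = c + d * z.
Proof.
move=> hM z hz.
pose J := fun r => exists c d, m c /\ r = c + d * z.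
have hJ : is_ideal J.
  split.
  - by exists 0, 0; split; [exact: mI0|rewrite mul0r addr0].
  - move=> x y [c [d [hc ->]]] [c' [d' [hc' ->]]].
    exists (c + c'), (d + d'); split; first exact: mID.
    by rewrite mulrDl; rewrite addrACA.
  - move=> a x [c [d [hc ->]]]; exists (a * c), (a * d); split; first exact: mIM.
    by rewrite mulrDr mulrA.
case: hM => [hI h1 hmax].
case: (hmax J hJ) => [x hx|//|hsub].
  by exists x, 0; rewrite mul0r addr0.
exfalso; apply: hz; apply: hsub; exists 0, 1; split; first by case: hI.
by rewrite add0r mul1r.
Qed.

Lemma m_prime {R : comNzRingType} {m : R -> Prop} : is_maximal_ideal m ->
  forall a b, m (a * b) -> m a \/ m b.
Proof.
move=> hM a b hab; case: (classic (m a)) => ha; [by left|right].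
have [c [d [hc e]]] := m_gen hM a ha.
have -> : b = c * b + d * (a * b).
  by rewrite mulrA -mulrDl -e mul1r.
by apply: mID => //; [apply: (mIMr hM)|apply: mIM].
Qed.
From mathcomp Require Import ring.

Lemma minimal_elt {R : comNzRingType} (hA : artinian R) (s0 : R) : s0 != 0 ->
  exists s, (exists a, s = a * s0) /\ s != 0 /\
    forall r, r * s != 0 -> exists a, s = a * (r * s).
Proof.
move=> hs0; apply: NNPP => H.
pose P s := (exists a, s = a * s0) /\ s != 0.
have Hex : forall s, exists r, P s -> r * s != 0 /\ forall a, s <> a * (r * s).
  move=> s; case: (classic (P s)) => Ps; last by exists 0.
  apply: NNPP => Hn; apply: H; exists s; split; first by case: Ps.
  split; first by case: Ps.
  move=> r hr; apply: NNPP => Hna; apply: Hn; exists r => _; split => //.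
  by move=> a ea; apply: Hna; exists a.
have [F HF] := functional_choice _ Hex.
pose sq := fun n => iter n (fun s => F s * s) s0.
have sqS : forall n, sq n.+1 = F (sq n) * sq n by [].
have Psq : forall n, P (sq n).
  elim=> [|n IH]; first by split => //; exists 1; rewrite mul1r.
  have [h1 h2] := HF _ IH; split; last by rewrite sqS.
  case: IH => [[a ea] _]; exists (F (sq n) * a); by rewrite sqS ea mulrA.
pose I := fun n x => exists a, x = a * sq n.
have hI : forall n, is_ideal (I n).
  move=> n; split.
  - by exists 0; rewrite mul0r.
  - by move=> x y [a ->] [b ->]; exists (a + b); rewrite mulrDl.
  - by move=> c x [a ->]; exists (c * a); rewrite mulrA.
have hdesc : forall n x, I n.+1 x -> I n x.
  by move=> n x [a ->]; exists (a * F (sq n)); rewrite sqS mulrA.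
have [N HN] := hA I hI hdesc.
have := (HN N.+1 (leqnSn N) (sq N)).2 (ex_intro _ 1 (esym (mul1r _))).
case=> a ea; have [_ h2] := HF _ (Psq N); apply: (h2 a).
by rewrite {1}ea sqS.
Qed.

Lemma nzd {R : comNzRingType} {m : R -> Prop} (hA : artinian R) (hloc : local_with m)
  (w s : R) : ~ m w -> w * s = 0 -> s = 0.
Proof.
move=> hw hws; apply: NNPP => /eqP hs.
have [s' [[a ea] [hs' hmin]]] := minimal_elt hA s hs.
pose J := fun r => r * s' = 0.
have hJ : is_maximal_ideal J.
  split.
  - split; first by rewrite /J mul0r.
    + by move=> x y; rewrite /J mulrDl => -> ->; rewrite addr0.
    + by move=> c x; rewrite /J -mulrA => ->; rewrite mulr0.
  - by rewrite /J mul1r; apply/eqP.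
  - move=> K [K0 KD KM] hsub.
    case: (classic (exists x, K x /\ x * s' != 0)) => [[x [hKx hx]] | hno].
      left; have [b eb] := hmin x hx.
      have K1 : K (1 - b * x).
        by apply: hsub; rewrite /J mulrBl mul1r -mulrA -eb subrr.
      by have := KD _ _ K1 (KM b x hKx); rewrite subrK.
    right => x hKx; apply: NNPP => hn; apply: hno; exists x; split => //.
    by apply/eqP.
apply: hw; apply: ((hloc.2 J hJ w).1).
by rewrite /J ea mulrCA hws mulr0.
Qed.

Lemma powstab {R : comNzRingType} (hA : artinian R) (z : R) :
  exists n y, z ^+ n = y * z ^+ n.+1.
Proof.
pose I := fun n x => exists a, x = a * z ^+ n.
have hI : forall n, is_ideal (I n).
  move=> n; split.
  - by exists 0; rewrite mul0r.
  - by move=> x y [a ->] [b ->]; exists (a + b); rewrite mulrDl.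
  - by move=> c x [a ->]; exists (c * a); rewrite mulrA.
have hdesc : forall n x, I n.+1 x -> I n x.
  by move=> n x [a ->]; exists (a * z); rewrite exprSr mulrA mulrAC.
have [N HN] := hA I hI hdesc.
have := (HN N.+1 (leqnSn N) (z ^+ N)).2 (ex_intro _ 1 (esym (mul1r _))).
by case=> a ea; exists N, a.
Qed.

Lemma notm_exp {R : comNzRingType} {m : R -> Prop} (hM : is_maximal_ideal m)
  (z : R) n : ~ m z -> ~ m (z ^+ n).
Proof.
move=> hz; elim: n => [|n IH]; first by rewrite expr0; exact: mI1 hM.
by rewrite exprS => /(m_prime hM) [].
Qed.

Lemma unitR {R : comNzRingType} {m : R -> Prop} (hA : artinian R) (hloc : local_with m)
  (z : R) : ~ m z -> exists y, y * z = 1.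
Proof.
move=> hz; have [n [y e]] := powstab hA z.
exists y; apply/esym/subr0_eq.
have hzn := notm_exp hloc.1 z n hz.
apply: (nzd hA hloc _ _ hzn).
by rewrite mulrBr mulr1 {1}e exprSr; ring.
Qed.

Lemma nilpR {R : comNzRingType} {m : R -> Prop} (hA : artinian R) (hloc : local_with m)
  (x : R) : m x -> exists n, x ^+ n = 0.
Proof.
move=> hx; have [n [y e]] := powstab hA x.
exists n; apply: (nzd hA hloc (1 - y * x)).
  2: by rewrite mulrBl mul1r {1}e exprSr; ring.
  move=> hw; apply: (mI1 hloc.1).
  by have := mID hloc.1 _ _ hw (mIM hloc.1 y x hx); rewrite subrK.
Qed.

Lemma unit1N {R : comNzRingType} (b : {poly R}) M : b ^+ M = 0 -> unit_polyR (1 + b).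
Proof.
move=> hb; exists (\sum_(i < M) (- b) ^+ i).
have h := subrX1 (- b) M.
rewrite exprNn hb mulr0 sub0r in h.
have -> : 1 + b = - (- b - 1) by rewrite opprB opprK.
by rewrite mulNr -h opprK.

Qed.

Lemma polyunit {R : comNzRingType} {m : R -> Prop} (hA : artinian R) (hloc : local_with m) :
  forall n (p : {poly R}), (size p <= n)%N -> ~ m p`_0 ->
    (forall i, (0 < i)%N -> m p`_i) -> unit_polyR p.
Proof.
have hM := hloc.1.
elim=> [|n IH] p hs h0 hi.
  move: hs; rewrite leqn0 size_poly_eq0 => /eqP hp.
  by exfalso; apply: h0; rewrite hp coef0; exact: mI0 hM.
case: (leqP (size p) 1) => hs1.
  have [y hy] := unitR hA hloc _ h0.
  by exists y%:P; rewrite {1}(size1_polyC hs1) -polyCM mulrC hy.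
set k := (size p).-1.
have hk : size p = k.+1 by rewrite /k prednK // (ltn_trans _ hs1).
have k0 : (0 < k)%N by rewrite -ltnS -hk.
pose q := \poly_(i < k) p`_i.
pose a := p`_k.
have hp : p = q + a%:P * 'X^k.
  apply/polyP => i; rewrite coefD coefCM coefXn coef_poly.
  case: (ltngtP i k) => hik.
  - by rewrite mulr0 addr0.
  - rewrite mulr0 addr0 nth_default //; by rewrite hk.
  - by rewrite hik mulr1 add0r.
have hq : unit_polyR q.
  apply: (IH q).
  - by rewrite (leq_trans (size_poly _ _)) // -ltnS -hk.
  - by rewrite coef_poly k0.
  - move=> i hi0; rewrite coef_poly; case: ifP => _; first exact: hi.
    exact: mI0 hM.
case: hq => q' hqq'.
have [M hM'] := nilpR hA hloc _ (hi k k0).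
have hb : (q' * (a%:P * 'X^k)) ^+ M = 0.
  by rewrite !exprMn -(rmorphXn polyC) hM' rmorph0 mul0r mulr0.
have [s hs'] := unit1N _ _ hb.
exists (q' * s).
rewrite hp.
have -> : q + a%:P * 'X^k = q * (1 + q' * (a%:P * 'X^k)).
  by rewrite mulrDr mulr1 mulrA hqq' mul1r.
by rewrite mulrCA -mulrA hs' mulr1 mulrC hqq'.
Qed.

Lemma idsum {R : comNzRingType} {S : R -> Prop} (hS : is_ideal S)
  (I : finType) (P : pred I) (F : I -> R) :
  (forall i, P i -> S (F i)) -> S (\sum_(i | P i) F i).
Proof. case: hS => S0 SD SM hF; elim/big_ind: _ => //. Qed.

Definition RD {R : comNzRingType} (m : R -> Prop) (k : {poly R}) (d : nat) :=
  ~ m k`_d /\ forall j, (d < j)%N -> m k`_j.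

Lemma notm_add {R : comNzRingType} {m : R -> Prop} (hM : is_maximal_ideal m) x y :
  ~ m x -> m y -> ~ m (x + y).
Proof.
move=> hx hy hxy; apply: hx.
by have := mID hM _ _ hxy (mIN hM _ hy); rewrite addrK.
Qed.

Lemma RD_mul {R : comNzRingType} {m : R -> Prop} (hM : is_maximal_ideal m)
  (g h : {poly R}) a b : RD m g a -> RD m h b -> RD m (g * h) (a + b).
Proof.
have hI : is_ideal m by case: hM.
move=> [ga gh] [ha hh]; split.
  rewrite coefM (bigD1 (Ordinal (ltn_addr b (ltnSn a)))) //= addKn.
  apply: notm_add => //.
    by move/(m_prime hM) => [].
  apply: idsum => // j /negbTE hj.
  case: (ltngtP j a) => hja.
  - apply: (mIM hM); apply: hh; rewrite ltn_subRL ltn_add2r //.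
  - by apply: (mIMr hM); apply: gh.
  - by move: hj; rewrite -val_eqE /= hja eqxx.
move=> j hj; rewrite coefM; apply: idsum => // i _.
case: (ltnP a i) => hia; first by apply: (mIMr hM); apply: gh.
apply: (mIM hM); apply: hh.
by rewrite ltn_subRL (leq_ltn_trans _ hj) // leq_add2r.
Qed.

Lemma classify {R : comNzRingType} {m : R -> Prop} (hA : artinian R) (hloc : local_with m)
  (k : {poly R}) : ~ unit_polyR k ->
  (forall i, m k`_i) \/ exists d, (0 < d)%N /\ RD m k d.
Proof.
move=> hk.
have hM := hloc.1.
suff : forall n, (forall j, (n <= j)%N -> m k`_j) ->
    (forall i, m k`_i) \/ exists d, RD m k d.
  move=> /(_ (size k)) [].
  - by move=> j hj; rewrite nth_default //; exact: mI0 hM.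
  - by left.
  move=> [d hd]; right; exists d; split => //.
  rewrite lt0n; apply/negP => /eqP d0; apply: hk.
  case: hd; rewrite d0 => h0 hi.
  exact: (polyunit hA hloc (size k) k (leqnn _) h0 hi).
elim=> [|n IH] hn; first by left => i; apply: hn.
case: (classic (m k`_n)) => hkn.
  apply: IH => j; rewrite leq_eqVlt => /orP [/eqP <-|]; [exact: hkn|exact: hn].
by right; exists n; split.
Qed.

Definition pspan {R : comNzRingType} (S : R -> Prop) (g : {poly R}) (r : R) :=
  exists a : nat -> R, (forall j, S (a j)) /\ r = \sum_(j < size g) a j * g`_j.

Lemma pspan_ideal {R : comNzRingType} {S : R -> Prop} (hS : is_ideal S) (g : {poly R}) :
  is_ideal (pspan S g).
Proof.
case: hS => S0 SD SM; split.
- exists (fun _ => 0); split => //; by rewrite big1 // => j _; rewrite mul0r.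
- move=> x y [a [ha ->]] [b [hb ->]]; exists (fun j => a j + b j); split.
    by move=> j; apply: SD.
  by rewrite -big_split; apply: eq_bigr => j _; rewrite mulrDl.
- move=> c x [a [ha ->]]; exists (fun j => c * a j); split; first by move=> j; apply: SM.
  by rewrite mulr_sumr; apply: eq_bigr => j _; rewrite mulrA.
Qed.

Lemma pspan_coef {R : comNzRingType} {S : R -> Prop} (hS : is_ideal S) (g : {poly R}) i x :
  S x -> pspan S g (g`_i * x).
Proof.
move=> hx; case: (ltnP i (size g)) => hi; last first.
  rewrite nth_default // mul0r; by case: (pspan_ideal hS g).
exists (fun j => if j == i then x else 0); split.
  by move=> j; case: ifP => _ //; case: hS.
rewrite (bigD1 (Ordinal hi)) //= eqxx big1 ?addr0; first by rewrite mulrC.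
move=> j hj; rewrite ifF ?mul0r //; apply/negbTE; exact: hj.
Qed.

Lemma pspan_closed {R : comNzRingType} {S T : R -> Prop} (hT : is_ideal T) (g : {poly R}) r :
  (forall i, T g`_i) -> pspan S g r -> T r.
Proof.
move=> hg [a [_ ->]]; apply: idsum => // j _.
by case: hT => _ _ TM; apply: TM.
Qed.

Lemma coefM_closed {R : comNzRingType} {T : R -> Prop} (hT : is_ideal T) (g k : {poly R}) i :
  (forall l j, T (g`_l * k`_j)) -> T ((g * k)`_i).
Proof. by move=> h; rewrite coefM; apply: idsum => // j _. Qed.

Lemma trueI (R : comNzRingType) : is_ideal (fun _ : R => True).
Proof. by split. Qed.

Lemma span_mul {R : comNzRingType} (g k : {poly R}) r :
  pspan (fun _ => True) (g * k) r -> pspan (fun _ => True) g r.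
Proof.
apply: pspan_closed; first exact: (pspan_ideal (trueI R) _).
move=> i; apply: coefM_closed; first exact: (pspan_ideal (trueI R) _).
by move=> l j; apply: pspan_coef (trueI R) _ _ _ _.
Qed.

Lemma mspan_mul {R : comNzRingType} {m : R -> Prop} (hM : is_maximal_ideal m)
  (g k : {poly R}) r : (forall j, m k`_j) ->
  pspan (fun _ => True) (g * k) r -> pspan m g r.
Proof.
have hI : is_ideal m by case: hM.
move=> hk; apply: pspan_closed; first exact: (pspan_ideal hI _).
move=> i; apply: coefM_closed; first exact: (pspan_ideal hI _).
by move=> l j; apply: pspan_coef.
Qed.

Lemma nak_gen {R : comNzRingType} {m : R -> Prop} (hA : artinian R) (hloc : local_with m) :
  forall n (v : nat -> R),
  (forall i, (i < n)%N -> exists a : nat -> R, (forall j, m (a j)) /\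
      v i = \sum_(j < n) a j * v j) ->
  forall i, (i < n)%N -> v i = 0.
Proof.
have hM := hloc.1.
elim=> [|n IH] v H i hi //.
have [a [ha ea]] := H n (ltnSn n).
rewrite big_ord_recr /= in ea.
have hna : ~ m (1 - a n).
  move=> h; apply: (mI1 hM).
  by have := mID hM _ _ h (ha n); rewrite subrK.
have [u hu] := unitR hA hloc _ hna.
have evn : v n = \sum_(j < n) (u * a j) * v j.
  have e2 : (1 - a n) * v n = \sum_(j < n) a j * v j.
    by rewrite mulrBl mul1r {1}ea addrK.
  rewrite -[v n]mul1r -hu -mulrA e2 mulr_sumr.
  by apply: eq_bigr => j _; rewrite mulrA.
have hlt : forall i, (i < n)%N -> v i = 0.
  apply: IH => i0 hi0.
  have [b [hb eb]] := H i0 (ltnW hi0).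
  exists (fun j => b j + b n * (u * a j)); split.
    by move=> j; apply: (mID hM _ _ (hb j)); apply: (mIM hM); apply: (mIM hM).
  rewrite eb big_ord_recr /= evn mulr_sumr -big_split /=.
  by apply: eq_bigr => j _; rewrite mulrDl mulrA.
rewrite ltnS leq_eqVlt in hi; case/orP: hi => [/eqP ->|]; last exact: hlt.
rewrite evn big1 // => j _; by rewrite hlt // mulr0.
Qed.

Lemma nakayama {R : comNzRingType} {m : R -> Prop} (hA : artinian R) (hloc : local_with m)
  (g : {poly R}) : (forall i, pspan m g g`_i) -> g = 0.
Proof.
move=> h; apply/polyP => i; rewrite coef0.
case: (ltnP i (size g)) => hi; last by rewrite nth_default.
by apply: (nak_gen hA hloc (size g) (fun j => g`_j)) => // i0 _; apply: h.
Qed.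

Lemma CB {R : comNzRingType} {m : R -> Prop} (hA : artinian R) (hloc : local_with m)
  (g Q : {poly R}) D : RD m Q D -> (size (g * Q)%R <= D)%N -> g = 0.
Proof.
have hM := hloc.1.
have hI : is_ideal m by case: hM.
have hP := pspan_ideal hI g.
move=> [hQD hQ] hs; apply: (nakayama hA hloc) => a.
suff : forall t a, (size g <= a + t)%N -> pspan m g g`_a.
  by apply; rewrite (leq_trans (leq_addl a _)) // addnC leqnn.
elim=> [|t IH] b hb.
  rewrite addn0 in hb; rewrite nth_default //; by case: hP.
have hz : (g * Q)`_(b + D) = 0 by rewrite nth_default // (leq_trans hs) // leq_addl.
rewrite coefM (bigD1 (Ordinal (leq_addr D b : (b < (b + D).+1)%N))) //= addKn in hz.
set rest := \sum_(i < _ | _) _ in hz.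
have hrest : pspan m g rest.
  apply: idsum => // j /negbTE hj.
  case: (ltngtP j b) => hjb.
  - apply: pspan_coef => //; apply: hQ.
    by rewrite ltn_subRL ltn_add2r.
  - case: hP => _ _ PM; rewrite mulrC; apply: PM; apply: IH.
    by rewrite (leq_trans hb) // addnS -addSn leq_add2r.
  - by move: hj; rewrite -val_eqE /= hjb eqxx.
have [u hu] := unitR hA hloc _ hQD.
have e1 : g`_b * Q`_D = - rest by apply/eqP; rewrite -addr_eq0 hz.
have -> : g`_b = u * ((-1) * rest) by rewrite mulN1r -e1 mulrCA hu mulr1.
case: hP => _ _ PM; exact: (PM u _ (PM (-1) rest hrest)).
Qed.

Definition Fz {R : comNzRingType} (f : {poly R}) :=
  exists s : seq {poly R},
    (forall g, g \in s -> irreducible_pol g) /\ f = \prod_(g <- s) g.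

Lemma Fz_mul {R : comNzRingType} (g h : {poly R}) : Fz g -> Fz h -> Fz (g * h).
Proof.
move=> [s1 [h1 ->]] [s2 [h2 ->]]; exists (s1 ++ s2); split; last by rewrite big_cat.
by move=> x; rewrite mem_cat => /orP []; [apply: h1|apply: h2].
Qed.

Lemma step {R : comNzRingType} (f : {poly R}) : ~ Fz f -> ~ unit_polyR f ->
  exists gk : {poly R} * {poly R}, f = gk.1 * gk.2 /\ ~ Fz gk.1 /\
    ~ unit_polyR gk.1 /\ ~ unit_polyR gk.2.
Proof.
move=> hF hu.
have hnirr : ~ irreducible_pol f.
  move=> hi; apply: hF; exists [:: f]; split; last by rewrite big_seq1.
  by move=> g; rewrite mem_seq1 => /eqP ->.
have [g [h [e [hg hh]]]] : exists g h, f = g * h /\ ~ unit_polyR g /\ ~ unit_polyR h.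
  apply: NNPP => Hn; apply: hnirr; split => // g h e.
  apply: NNPP => Hn2; apply: Hn; exists g, h; split => //.
  by split => H; apply: Hn2; [left|right].
case: (classic (Fz g)) => hFg.
  exists (h, g); split; first by rewrite /= mulrC.
  split => //= hFh; apply: hF; rewrite e; exact: Fz_mul.
by exists (g, h).
Qed.

Theorem proposition3p1 (R : comNzRingType) (m : R -> Prop)
  (hA : artinian R) (hloc : local_with m) (hm0 : exists x : R, m x /\ x != 0)
  (f : {poly R}) (hdeg : (1 < size f)%N) (hnu : ~ unit_polyR f) :
  exists s : seq {poly R},
    (forall g, g \in s -> irreducible_pol g) /\ f = \prod_(g <- s) g.
Proof.
apply: NNPP => hF0; rewrite -/(Fz f) in hF0.
have hM := hloc.1.
have f0 : f != 0 by rewrite -size_poly_gt0 (ltn_trans _ hdeg).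
have Hex : forall p : {poly R}, exists gk : {poly R} * {poly R},
    ~ Fz p /\ ~ unit_polyR p -> p = gk.1 * gk.2 /\ ~ Fz gk.1 /\
    ~ unit_polyR gk.1 /\ ~ unit_polyR gk.2.
  move=> p; case: (classic (~ Fz p /\ ~ unit_polyR p)) => [[h1 h2]|hn].
    by have [gk hgk] := step _ h1 h2; exists gk.
  by exists (0, 0).
have [G HG] := functional_choice _ Hex.
pose fs := fun n => iter n (fun p => (G p).1) f.
pose ks := fun n => (G (fs n)).2.
have fsS : forall n, fs n.+1 = (G (fs n)).1 by [].
have inv : forall n, ~ Fz (fs n) /\ ~ unit_polyR (fs n).
  elim=> [|n IH]; first by split.
  by have [_ [h1 [h2 _]]] := HG _ IH; rewrite fsS.
have hstep : forall n, fs n = fs n.+1 * ks n /\ ~ unit_polyR (ks n).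
  move=> n; have [e [_ [_ h]]] := HG _ (inv n); by rewrite fsS.
pose Pn := fun n => \prod_(i < n) ks i.
have hfP : forall n, f = fs n * Pn n.
  elim=> [|n IH]; first by rewrite /Pn big_ord0 mulr1.
  rewrite /Pn big_ord_recr /= -/(Pn n) {1}IH {1}(hstep n).1.
  by rewrite -mulrA [ks n * _]mulrC.
pose I := fun n => pspan (fun _ => True) (Pn n).
have hI : forall n, is_ideal (I n) by move=> n; exact: (pspan_ideal (trueI R) _).
have hdesc : forall n x, I n.+1 x -> I n x.
  move=> n x; rewrite /I /Pn big_ord_recr /=; exact: span_mul.
have [N HN] := hA I hI hdesc.
have typeb : forall n, (N <= n)%N -> exists d, (0 < d)%N /\ RD m (ks n) d.
  move=> n hn; case: (classify hA hloc (ks n) (hstep n).2) => // hall.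
  exfalso; move/eqP: f0; apply.
  have hP : Pn n = 0.
    apply: (nakayama hA hloc) => i.
    apply: (mspan_mul hM (Pn n) (ks n)) => //.
    have : I n.+1 (Pn n)`_i.
      apply/(HN _ (leqW hn)); apply/(HN _ hn).
      rewrite -[_`_i]mulr1; exact: (pspan_coef (trueI R)).
    by rewrite /I /Pn big_ord_recr.
  by rewrite (hfP n) hP mulr0.
have chain : forall j, exists Q D, (j <= D)%N /\ RD m Q D /\ fs N = fs (N + j)%N * Q.
  elim=> [|j [Q [D [hjD [hRD e]]]]].
    exists 1, 0%N; split => //; split; last by rewrite addn0 mulr1.
    split; first by rewrite coefC /=; exact: (mI1 hM).
    by move=> j hj; rewrite coefC gtn_eqF //; exact: (mI0 hM).
  have [d [d0 hd]] := typeb (N + j)%N (leq_addr _ _).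
  exists (ks (N + j) * Q), (d + D)%N; split; first by rewrite -add1n leq_add.
  split; first exact: RD_mul.
  by rewrite e (hstep (N + j)%N).1 addnS mulrA.
have [Q [D [hjD [hRD e]]]] := chain (size (fs N)).
have hz : fs (N + size (fs N))%N = 0.
  apply: (CB hA hloc _ Q D hRD); by rewrite -e.
by move/negP: f0; apply; rewrite (hfP N) e hz !mul0r.
Qed.
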